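(* Let $n,k\geq1$. The dimension of the tropical RBM model $TM^k_n$ equals the maximum rank of a $2^n\times(nk+n+k)$ matrix of the form $\mathcal{A}=(A\mid A_{C_1}\mid A_{C_2}\mid\cdots\mid A_{C_k})$, where the maximum is taken over all choices of $k$ slicings $C_1,\dots,C_k$ of the $n$-cube.
   Context: Fix an ordering of $\{0,1\}^n$ indexing coordinates of $\mathbb{R}^{2^n}$ and matrix rows. The tropical morphism $\Phi:\mathbb{R}^{nk+n+k}\to\mathbb{TP}^{2^n-1}=\mathbb{R}^{2^n}/\mathbb{R}(1,\dots,1)$ sends $(W,b,c)\in\mathbb{R}^{k\times n}\times\mathbb{R}^n\times\mathbb{R}^k$ to the class of $(q(v))_{v\in\{0,1\}^n}$, $q(v)=\max_{h\in\{0,1\}^k}\{h^{\top}Wv+b^{\top}v+c^{\top}h\}$. The tropical RBM model $TM^k_n$ is the image of $\Phi$; it is a finite union of polyhedral cones and its dimension is the maximum dimension of a cone contained in it. A subset $C\subseteq\{0,1\}^n$ is a slicing of the $n$-cube if some affine hyperplane has all vertices of $C$ strictly on its positive side and all other vertices of $\{0,1\}^n$ strictly on its negative side. $A$ is the $2^n\times n$ matrix whose row indexed by $v$ is $v$; for a slicing $C$, $A_C$ is the $2^n\times(n+1)$ matrix whose row indexed by $v\in C$ is $(1,v)$ and whose other rows are zero.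
   Formalization: $TM^k_n$ is the set of vectors $(q(v))_{v\in\{0,1\}^n}$ in $\mathbb{R}^{2^n}$ rather than their classes in $\mathbb{TP}^{2^n-1}$, so its dimension is the largest dimension of a polyhedral cone in $\mathbb{R}^{2^n}$ contained in it. The statement above fails without it. *)

(* Defs.v *)
From HB Require Import structures.
From mathcomp Require Import all_boot all_order all_algebra.
From mathcomp Require Import reals.
Set Implicit Arguments. Unset Strict Implicit. Unset Printing Implicit Defensive.
Import Order.TTheory GRing.Theory Num.Theory.
Local Open Scope ring_scope.

Definition Cube (n : nat) := {ffun 'I_n -> bool}.

(* Number of coordinates of R^{2^n}; the fixed ordering of {0,1}^n is enum_val. *)
Definition N (n : nat) : nat := #|Cube n|.

Section RBM.
Variable R : realType.

Definition rbm_energy (n k : nat) (W : 'M[R]_(k, n)) (b : 'cV[R]_n) (c : 'cV[R]_k)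
  (v : Cube n) (h : Cube k) : R :=
  \sum_(i < k) \sum_(j < n) (h i)%:R * W i j * (v j)%:R
  + \sum_(j < n) b j 0 * (v j)%:R + \sum_(i < k) c i 0 * (h i)%:R.

(* q(v) = max over h in {0,1}^k of the energy (the max is over a nonempty
   finite set; the seed value is the term h = 0, which belongs to it). *)
Definition rbm_q (n k : nat) W b c (v : Cube n) : R :=
  \big[Num.max / rbm_energy W b c v [ffun => false]]_(h : Cube k)
     rbm_energy W b c v h.

Definition Phi (n k : nat) (W : 'M[R]_(k, n)) (b : 'cV[R]_n) (c : 'cV[R]_k)
  : 'rV[R]_(N n) :=
  \row_(r < N n) rbm_q W b c (enum_val r).

Definition inTM (n k : nat) (x : 'rV[R]_(N n)) : Prop :=
  exists (W : 'M[R]_(k, n)) (b : 'cV[R]_n) (c : 'cV[R]_k), x = Phi W b c.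

Definition cone_in_TM (n k m : nat) (G : 'M[R]_(m, N n)) : Prop :=
  forall lam : 'rV[R]_m, (forall i, 0 <= lam 0 i) -> inTM k (lam *m G).

(* Dimension of the cone generated by the rows of G = dim of its linear span. *)
Definition cone_dim (n m : nat) (G : 'M[R]_(m, N n)) : nat := \rank G.

Definition slicing (n : nat) (C : {set Cube n}) : Prop :=
  exists (a0 : R) (a : 'I_n -> R), forall v : Cube n,
    (v \in C -> 0 < a0 + \sum_(j < n) a j * (v j)%:R) /\
    (v \notin C -> a0 + \sum_(j < n) a j * (v j)%:R < 0).

Definition cubeA (n : nat) : 'M[R]_(N n, n) :=
  \matrix_(r < N n, j < n) ((enum_val r : Cube n) j)%:R.

(* A_C : row v is (1, v) if v in C, zero otherwise. *)
Definition cubeAC (n : nat) (C : {set Cube n}) : 'M[R]_(N n, n.+1) :=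
  \matrix_(r < N n, j < n.+1)
    (if enum_val r \in C then
       (if unlift ord0 j is Some j' then ((enum_val r : Cube n) j')%:R else 1)
     else 0).

Definition rbmA (n k : nat) (Cs : 'I_k -> {set Cube n}) :=
  row_mx (cubeA n) (\mxrow_(i < k) cubeAC (Cs i)).

End RBM.

(* Main.v *)
Require Import Defs.
From HB Require Import structures.
From mathcomp Require Import all_boot all_order all_algebra.
From mathcomp Require Import reals ring lra zify.
From Stdlib Require Import Classical ClassicalEpsilon FunctionalExtensionality.
Import Order.TTheory GRing.Theory Num.Theory.
Local Open Scope ring_scope.
Set Implicit Arguments. Unset Strict Implicit. Unset Printing Implicit Defensive.

Section Aux.
Variable R : realType.

Lemma bigmax_le (I : eqType) (r : seq I) (F : I -> R) x0 M :
  (forall h, F h <= M) -> x0 <= M -> \big[Num.max/x0]_(h <- r) F h <= M.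
Proof.
move=> HF H0; elim: r => [|a r IH]; first by rewrite big_nil.
by rewrite big_cons ge_max HF IH.
Qed.

Lemma le_bigmax (I : eqType) (r : seq I) (F : I -> R) x0 h :
  h \in r -> F h <= \big[Num.max/x0]_(h <- r) F h.
Proof.
elim: r => [|a r IH] //; rewrite in_cons big_cons le_max.
by case/orP=> [/eqP->|/IH->]; rewrite ?lexx ?orbT.
Qed.

Definition zz n k (W : 'M[R]_(k, n)) (c : 'cV[R]_k) (v : Cube n) (i : 'I_k) :=
  c i 0 + \sum_(j < n) W i j * (v j)%:R.

Lemma energyE n k (W : 'M[R]_(k, n)) b c v h :
  rbm_energy W b c v h =
  \sum_(j < n) b j 0 * (v j)%:R + \sum_(i < k) (h i)%:R * zz W c v i.
Proof.
rewrite /rbm_energy.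
have -> : \sum_(i < k) (h i)%:R * zz W c v i =
  \sum_(i < k) \sum_(j < n) (h i)%:R * W i j * (v j)%:R + \sum_(i < k) c i 0 * (h i)%:R.
  rewrite -big_split /=; apply: eq_bigr => i _.
  rewrite /zz mulrDr mulrC mulr_sumr addrC; congr (_ + _); apply: eq_bigr => j _.
  by rewrite mulrA.
by rewrite addrCA addrA.
Qed.

Lemma qE n k (W : 'M[R]_(k, n)) b c v :
  rbm_q W b c v =
  \sum_(j < n) b j 0 * (v j)%:R +
  \sum_(i < k) (if 0 < zz W c v i then zz W c v i else 0).
Proof.
set hs := [ffun i => 0 < zz W c v i].
have Es : rbm_energy W b c v hs = \sum_(j < n) b j 0 * (v j)%:R +
  \sum_(i < k) (if 0 < zz W c v i then zz W c v i else 0).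
  rewrite energyE; congr (_ + _); apply: eq_bigr => i _; rewrite ffunE.
  by case: ifP; rewrite ?mul1r ?mul0r.
have Hle : forall h, rbm_energy W b c v h <= rbm_energy W b c v hs.
  move=> h; rewrite !energyE lerD2l; apply: ler_sum => i _; rewrite ffunE.
  case: (h i); case: (boolP (0 < zz W c v i)) => Hz /=;
    rewrite ?mul1r ?mul0r ?lexx //.
  - by rewrite leNgt.
  - by apply: ltW.
apply/eqP; rewrite -Es eq_le; apply/andP; split.
  by apply: bigmax_le.
by apply: le_bigmax; rewrite mem_index_enum.
Qed.


Definition PP n k := (n + \sum_(i < k) n.+1)%N.

Definition xs_of n k (x : 'rV[R]_(PP n k)) (i : 'I_k) : 'rV[R]_(n.+1) :=
  @submxrow R k (fun _ => n.+1) 1 (rsubmx x) i.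
Definition Wx n k (x : 'rV[R]_(PP n k)) : 'M[R]_(k, n) :=
  \matrix_(i, j) xs_of x i 0 (lift ord0 j).
Definition bx n k (x : 'rV[R]_(PP n k)) : 'cV[R]_n := (lsubmx x)^T.
Definition cx n k (x : 'rV[R]_(PP n k)) : 'cV[R]_k := \col_i xs_of x i 0 ord0.

Lemma psiE n k (Cs : 'I_k -> {set Cube n}) (x : 'rV[R]_(PP n k)) r :
  (x *m (rbmA R Cs)^T) 0 r =
  \sum_(j < n) bx x j 0 * ((enum_val r : Cube n) j)%:R +
  \sum_(i < k) (if enum_val r \in Cs i then zz (Wx x) (cx x) (enum_val r) i else 0).
Proof.
rewrite -{1}(hsubmxK x) -(submxrowK (rsubmx x)).
rewrite /rbmA tr_row_mx tr_mxrow mul_row_col mul_mxrow_mxcol mxE summxE.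
congr (_ + _).
  by rewrite mxE; apply: eq_bigr => j _; rewrite !mxE.
apply: eq_bigr => i _; rewrite mxE big_ord_recl.
rewrite !mxE unlift_none.
case: ifP => Hv; last first.
  by rewrite mulr0 add0r big1 // => j _; rewrite !mxE Hv mulr0.
rewrite /zz !mxE mulr1; congr (_ + _); apply: eq_bigr => j _.
by rewrite !mxE Hv liftK.
Qed.


Lemma PhiE n k (Cs : 'I_k -> {set Cube n}) (x : 'rV[R]_(PP n k)) :
  (forall i v, (v \in Cs i -> 0 <= zz (Wx x) (cx x) v i) /\
               (v \notin Cs i -> zz (Wx x) (cx x) v i <= 0)) ->
  Phi (Wx x) (bx x) (cx x) = x *m (rbmA R Cs)^T.
Proof.
move=> H; apply/matrixP => z r; rewrite (ord1 z) psiE mxE qE; congr (_ + _).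
apply: eq_bigr => i _; have [H1 H2] := H i (enum_val r).
case: (boolP (enum_val r \in Cs i)) => Hv.
  by have := H1 Hv; rewrite le0r => /orP[/eqP->|->]; rewrite ?ltxx.
by rewrite ltNge H2.
Qed.


Definition x_of n k (W : 'M[R]_(k, n)) (b : 'cV[R]_n) (c : 'cV[R]_k) : 'rV[R]_(PP n k) :=
  row_mx b^T (@mxrow R k (fun _ => n.+1) 1 (fun i =>
     \row_(j < n.+1) (if unlift ord0 j is Some j' then W i j' else c i 0))).

Lemma x_ofK n k (W : 'M[R]_(k, n)) b c :
  [/\ Wx (x_of W b c) = W, bx (x_of W b c) = b & cx (x_of W b c) = c].
Proof.
split; apply/matrixP => i j.
- by rewrite mxE /xs_of row_mxKr mxrowK !mxE liftK.
- by rewrite /bx row_mxKl trmxK.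
- by rewrite mxE /xs_of row_mxKr mxrowK !mxE (ord1 j) unlift_none.
Qed.

Lemma slicing_pos n k (W : 'M[R]_(k, n)) (c : 'cV[R]_k) i :
  slicing R [set v | 0 < zz W c v i].
Proof.
set S := \sum_(v : Cube n) (if 0 < zz W c v i then (zz W c v i)^-1 else 0).
have S0 : 0 <= S by apply: sumr_ge0 => v _; case: ifP => // /ltW; rewrite invr_ge0.
have S1 : 0 < S + 1 by rewrite ltr_wpDl.
exists (c i 0 - (S + 1)^-1), (fun j => W i j) => v.
have -> : c i 0 - (S + 1)^-1 + \sum_(j < n) W i j * (v j)%:R = zz W c v i - (S+1)^-1.
  by rewrite /zz addrAC.
rewrite inE; split => Hv.
  rewrite subr_gt0 invf_plt ?posrE //.
  apply: (le_lt_trans (y := S)); last by rewrite ltrDl ltr01.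
  rewrite /S (bigD1 v) //= Hv ler_wpDr //.
  by apply: sumr_ge0 => w _; case: ifP => // /ltW; rewrite invr_ge0.
rewrite subr_lt0; apply: (le_lt_trans (y := 0)); first by rewrite leNgt.
by rewrite invr_gt0.
Qed.

Lemma upper n k (W : 'M[R]_(k, n)) b c :
  exists Cs : {ffun 'I_k -> {set Cube n}}, (forall i, slicing R (Cs i)) /\
    (Phi W b c <= (rbmA R Cs)^T)%MS.
Proof.
exists [ffun i => [set v | 0 < zz W c v i]]; split.
  by move=> i; rewrite ffunE; apply: slicing_pos.
have [EW Eb Ec] := x_ofK W b c.
have := @PhiE n k [ffun i => [set v | 0 < zz W c v i]] (x_of W b c).
rewrite EW Eb Ec => ->; first exact: submxMl.
move=> i v; rewrite ffunE inE; split => H; first exact: ltW.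
by rewrite leNgt.
Qed.


Lemma subB_sub p q m (A1 A2 : 'M[R]_(p, m)) (C : 'M[R]_(q, m)) :
  (A1 <= C)%MS -> (A2 <= C)%MS -> ((A1 - A2)%R <= C)%MS.
Proof.
move=> H1 H2; apply: addmx_sub => //; rewrite -scaleN1r; exact: scalemx_sub.
Qed.

Lemma ray (I : eqType) (P : I -> Prop) p m (B : I -> 'M[R]_(p, m))
    (s : seq I) (x0 y : 'rV[R]_m) :
  (forall t : nat, exists i, i \in s /\ P i /\ ((x0 + t%:R *: y)%R <= B i)%MS) ->
  exists i, i \in s /\ P i /\ (x0 <= B i)%MS /\ (y <= B i)%MS.
Proof.
elim: s x0 => [|a s IH] x0 H; first by case: (H 0%N) => i [].
case: (classic (exists t1 t2 : nat, t1 <> t2 /\ P a /\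
    ((x0 + t1%:R *: y)%R <= B a)%MS /\ ((x0 + t2%:R *: y)%R <= B a)%MS)).
  move=> [t1 [t2 [Hne [Pa [H1 H2]]]]].
  have Hd : (t1%:R - t2%:R : R) != 0.
    by rewrite subr_eq0 eqr_nat; apply/eqP.
  have Hy : (y <= B a)%MS.
    have : ((t1%:R - t2%:R) *: y <= B a)%MS.
      have -> : (t1%:R - t2%:R : R) *: y = (x0 + t1%:R *: y) - (x0 + t2%:R *: y).
        by rewrite scalerBl opprD addrACA subrr add0r.
      exact: (subB_sub H1 H2).
    move/(scalemx_sub (t1%:R - t2%:R)^-1).
    by rewrite scalerA mulVf // scale1r.
  exists a; split; first by rewrite inE eqxx.
  split=> //; split=> //.
  have -> : x0 = (x0 + t1%:R *: y) - t1%:R *: y by rewrite addrK.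
  by apply: subB_sub => //; apply: scalemx_sub.
move=> Hn.
have [T HT] : exists T : nat, forall t, (T <= t)%N ->
    ~ (P a /\ ((x0 + t%:R *: y)%R <= B a)%MS).
  case: (classic (exists t0 : nat, P a /\ ((x0 + t0%:R *: y)%R <= B a)%MS)).
    move=> [t0 [Pa H0]]; exists t0.+1 => t Ht [_ Hta]; apply: Hn.
    exists t, t0; split; last by [].
    by move=> E; move: Ht; rewrite E ltnn.
  by move=> Hne; exists 0%N => t _ Ht; apply: Hne; exists t.
have [i [Hi [Pi [Hx Hy]]]] : exists i, i \in s /\ P i /\
    ((x0 + T%:R *: y)%R <= B i)%MS /\ (y <= B i)%MS.
  apply: IH => t; have [i [Hi [Pi Hit]]] := H (T + t)%N.
  exists i; move: Hi; rewrite in_cons => /orP[/eqP Ei|Hi].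
    by exfalso; apply: (HT (T + t)%N); [rewrite leq_addr | rewrite -Ei].
  by split=> //; split=> //; rewrite -addrA -scalerDl -natrD.
exists i; split; first by rewrite in_cons Hi orbT.
split=> //; split=> //.
have -> : x0 = (x0 + T%:R *: y) - T%:R *: y by rewrite addrK.
by apply: subB_sub => //; apply: scalemx_sub.
Qed.

Lemma cover (I : finType) (P : I -> Prop) p m (B : I -> 'M[R]_(p, m))
    (K : 'rV[R]_m -> Prop) :
  K 0 -> (forall x y, K x -> K y -> K (x + y)) ->
  (forall a x, 0 <= a -> K x -> K (a *: x)) ->
  (forall y, K y -> exists i, P i /\ (y <= B i)%MS) ->
  exists i, P i /\ forall y, K y -> (y <= B i)%MS.
Proof.
move=> K0 KD KZ HK.
suff : forall s : seq I, (forall y, K y -> exists i, i \in s /\ P i /\ (y <= B i)%MS) ->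
  exists i, P i /\ forall y, K y -> (y <= B i)%MS.
  apply; move=> y /HK [i [Pi Hi]]; exists i; split=> //; exact: mem_enum.
elim=> [|a s IH] Hs; first by have [i []] := Hs 0 K0.
case: (classic (forall y, K y -> exists i, i \in s /\ P i /\ (y <= B i)%MS)).
  exact: IH.
move/not_all_ex_not => [x0 Hx0].
have Kx0 : K x0 by apply: NNPP => HnK; apply: Hx0.
have Hnot : ~ exists i, i \in s /\ P i /\ (x0 <= B i)%MS by move=> E; apply: Hx0.
have onlya : forall i, i \in a :: s -> P i -> (x0 <= B i)%MS -> i = a.
  move=> i; rewrite in_cons => /orP[/eqP //|Hi] Pi Hb.
  by exfalso; apply: Hnot; exists i.
have [i [Hi [Pi Hb]]] := Hs x0 Kx0.
have Ei := onlya i Hi Pi Hb; subst i.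
exists a; split=> // y Ky.
have [j [Hj [Pj [Hxj Hyj]]]] : exists j, j \in a :: s /\ P j /\
    (x0 <= B j)%MS /\ (y <= B j)%MS.
  apply: ray => t; apply: Hs; apply: KD => //; apply: KZ => //; exact: ler0n.
by rewrite -(onlya j Hj Pj Hxj).
Qed.


Lemma exmax (I : finType) (P : I -> Prop) (f : I -> nat) i0 :
  P i0 -> exists i, P i /\ forall j, P j -> (f j <= f i)%N.
Proof.
pose bd := (\max_(i : I) f i)%N.
have Hb : forall i, (f i <= bd)%N by move=> i; exact: leq_bigmax.
suff : forall m i0, P i0 -> (bd - f i0 <= m)%N ->
  exists i, P i /\ forall j, P j -> (f j <= f i)%N.
  by move=> H Pi0; apply: (H _ i0 Pi0 (leqnn _)).
elim=> [|m IH] i1 Pi1 Hm.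
  exists i1; split=> // j _; have := Hb j; have := Hb i1; lia.
case: (classic (forall j, P j -> (f j <= f i1)%N)) => [H|]; first by exists i1.
move/not_all_ex_not => [j Hj].
have Pj : P j by apply: NNPP => nPj; apply: Hj.
have Hlt : (f i1 < f j)%N by rewrite ltnNge; apply/negP => E; apply: Hj.
apply: (IH j Pj); have := Hb j; have := Hb i1; lia.
Qed.


Lemma WxD n k (a : R) (x y : 'rV[R]_(PP n k)) i j :
  Wx (a *: x + y) i j = a * Wx x i j + Wx y i j.
Proof. by rewrite /Wx /xs_of !mxE. Qed.

Lemma cxD n k (a : R) (x y : 'rV[R]_(PP n k)) i j :
  cx (a *: x + y) i j = a * cx x i j + cx y i j.
Proof. by rewrite /cx /xs_of !mxE. Qed.

Lemma zzD n k (a : R) (x y : 'rV[R]_(PP n k)) v i :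
  zz (Wx (a *: x + y)) (cx (a *: x + y)) v i =
  a * zz (Wx x) (cx x) v i + zz (Wx y) (cx y) v i.
Proof.
rewrite /zz cxD.
under eq_bigr do rewrite WxD.
rewrite mulrDr addrACA; congr (_ + _).
rewrite mulr_sumr -big_split; apply: eq_bigr => j _ /=.
by rewrite mulrDl mulrA.
Qed.

Lemma zz_bound n k (y : 'rV[R]_(PP n k)) (S : R) v i :
  (forall j, `|y 0 j| <= S) -> `|zz (Wx y) (cx y) v i| <= n.+1%:R * S.
Proof.
move=> Hy.
rewrite /zz; apply: (le_trans (ler_normD _ _)).
have h1 : `|cx y i 0| <= S by rewrite /xs_of !mxE.
have h2 : `|\sum_(j < n) Wx y i j * (v j)%:R| <= n%:R * S.
  apply: (le_trans (ler_norm_sum _ _ _)).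
  have -> : n%:R * S = \sum_(j < n) S by rewrite sumr_const card_ord mulr_natl.
  apply: ler_sum => j _; rewrite normrM.
  have hv : `|(v j)%:R : R| <= 1 by case: (v j); rewrite ?normr1 ?normr0.
  have hw : `|Wx y i j| <= S by rewrite /xs_of !mxE.
  by rewrite -[S]mulr1; apply: ler_pM.
rewrite -natr1 mulrDl mul1r addrC; exact: lerD.
Qed.


Lemma single_le (I : finType) (F : I -> R) j :
  (forall i, 0 <= F i) -> F j <= \sum_i F i.
Proof.
by move=> H; rewrite (bigD1 j) //= ler_wpDr //; apply: sumr_ge0 => i _.
Qed.

Lemma lower n k (Cs : 'I_k -> {set Cube n}) : (forall i, slicing R (Cs i)) ->
  exists m (G : 'M[R]_(m, N n)), cone_in_TM k G /\ \rank G = \rank (rbmA R Cs).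
Proof.
move=> HS.
pose s0 i := proj1_sig (constructive_indefinite_description _ (HS i)).
have Hs1 i : exists a : 'I_n -> R, forall v : Cube n,
    (v \in Cs i -> 0 < s0 i + \sum_(j < n) a j * (v j)%:R) /\
    (v \notin Cs i -> s0 i + \sum_(j < n) a j * (v j)%:R < 0).
  exact: (proj2_sig (constructive_indefinite_description _ (HS i))).
pose s1 i := proj1_sig (constructive_indefinite_description _ (Hs1 i)).
have Hs i v : (v \in Cs i -> 0 < s0 i + \sum_(j < n) s1 i j * (v j)%:R) /\
    (v \notin Cs i -> s0 i + \sum_(j < n) s1 i j * (v j)%:R < 0).
  exact: (proj2_sig (constructive_indefinite_description _ (Hs1 i)) v).
pose W0 : 'M[R]_(k, n) := \matrix_(i, j) s1 i j.
pose c0 : 'cV[R]_k := \col_i s0 i.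
pose xp := x_of W0 0 c0.
pose zp i v := zz (Wx xp) (cx xp) v i.
have zpC i v : (v \in Cs i -> 0 < zp i v) /\ (v \notin Cs i -> zp i v < 0).
  have [EW _ Ec] := x_ofK W0 0 c0.
  rewrite /zp EW Ec /zz !mxE.
  under eq_bigr do rewrite mxE.
  exact: Hs.
have zp0 i v : 0 < `|zp i v|.
  rewrite normr_gt0; have [H1 H2] := zpC i v.
  case: (boolP (v \in Cs i)) => Hv.
    by rewrite gt_eqF ?H1.
  by rewrite lt_eqF ?H2.
pose T := \sum_i \sum_(v : Cube n) (n.+1%:R / `|zp i v|).
have HT i v : n.+1%:R <= T * `|zp i v|.
  have -> : (n.+1%:R : R) = n.+1%:R / `|zp i v| * `|zp i v|.
    by rewrite divfK // gt_eqF.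
  apply: ler_wpM2r; first exact: normr_ge0.
  have h1 := @single_le _ (fun w => n.+1%:R / `|zp i w|) v
    (fun w => divr_ge0 (ler0n _ _) (normr_ge0 _)).
  have h2 := @single_le _ (fun i => \sum_(w : Cube n) n.+1%:R / `|zp i w|) i
    (fun i' => sumr_ge0 _ (fun w _ => divr_ge0 (ler0n _ _) (normr_ge0 _))).
  exact: (le_trans h1 h2).
pose M := rbmA R Cs.
pose Xp : 'M[R]_(PP n k) := \matrix_(r, j) (T * xp 0 j).
pose G := col_mx (Xp + 1%:M) (Xp - 1%:M) *m M^T.
exists (PP n k + PP n k)%N, G; split.
  move=> lam Hlam.
  pose l1 := lsubmx lam; pose l2 := rsubmx lam.
  have El : lam = row_mx l1 l2 by rewrite hsubmxK.
  have l1g j : 0 <= l1 0 j by rewrite mxE; apply: Hlam.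
  have l2g j : 0 <= l2 0 j by rewrite mxE; apply: Hlam.
  pose S1 := \sum_r l1 0 r; pose S2 := \sum_r l2 0 r.
  pose S := S1 + S2.
  have S0 : 0 <= S by rewrite addr_ge0 // sumr_ge0.
  pose y := l1 - l2.
  have Hy j : `|y 0 j| <= S.
    have hl1 := @single_le _ (fun r => l1 0 r) j l1g.
    have hl2 := @single_le _ (fun r => l2 0 r) j l2g.
    have g1 := l1g j; have g2 := l2g j.
    move: hl1 hl2 g1 g2; rewrite /y /S /S1 /S2 !mxE => hl1 hl2 g1 g2.
    apply: (le_trans (ler_normB _ _)); rewrite !ger0_norm //; exact: lerD.
  pose x := (S * T) *: xp + y.
  have XpE l : l *m Xp = ((\sum_r l 0 r) * T) *: xp.
    apply/matrixP => i j; rewrite (ord1 i) [LHS]mxE.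
    by rewrite [RHS]mxE !mulr_suml; apply: eq_bigr => r _; rewrite mxE; ring.
  have Ex : lam *m G = x *m M^T.
    rewrite /G mulmxA El mul_row_col mulmxDr mulmxBr !mulmx1 !XpE.
    congr (_ *m _); rewrite /x /y /S mulrDl scalerDl.
    by rewrite addrACA.
  exists (Wx x), (bx x), (cx x).
  rewrite Ex (PhiE (Cs := Cs)) // => i v.
  rewrite /x zzD.
  have := zz_bound v i Hy; rewrite ler_norml => /andP[Hb1 Hb2].
  have [H1 H2] := zpC i v; have HTi := HT i v.
  have HSz : S * n.+1%:R <= S * (T * `|zp i v|) by apply: ler_wpM2l.
  split => Hv.
    move: HSz; rewrite gtr0_norm ?H1 // mulrA => HSz.
    rewrite -/(zp i v); lra.
  move: HSz; rewrite ltr0_norm ?H2 // mulrN mulrN mulrA => HSz.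
  rewrite -/(zp i v); lra.
apply/eqP; rewrite -(mxrank_tr M) eqn_leq; apply/andP; split.
  by apply: mxrankS; apply: submxMl.
apply: mxrankS.
have -> : M^T = ((2%:R)^-1 *: row_mx 1%:M (- 1%:M)) *m G.
  rewrite /G mulmxA -scalemxAl mul_row_col mulNmx !mul1mx.
  have e : forall A B : 'M[R]_(PP n k), A + B - (A - B) = (2%:R : R) *: B.
    by move=> A B; apply/matrixP => i j; rewrite !mxE; ring.
  rewrite e.
  by rewrite scalerA mulVf ?pnatr_eq0 // scale1r mul1mx.
exact: submxMl.
Qed.


End Aux.

Lemma rbmA_ffun (R : realType) n k (Cs : 'I_k -> {set Cube n}) :
  rbmA R (finfun Cs) = rbmA R Cs.
Proof.
congr (rbmA R _); apply: functional_extensionality => i; by rewrite ffunE.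
Qed.

Theorem theorem4p2 (R : realType) (n k : nat) (hn : (1 <= n)%N) (hk : (1 <= k)%N) :
  exists d : nat,
    (* d is the maximum rank of (A | A_{C_1} | ... | A_{C_k}) over slicings *)
    ((exists Cs : 'I_k -> {set Cube n},
        (forall i, slicing R (Cs i)) /\ \rank (rbmA R Cs) = d) /\
     (forall Cs : 'I_k -> {set Cube n},
        (forall i, slicing R (Cs i)) -> (\rank (rbmA R Cs) <= d)%N)) /\
    (* d is the dimension of TM^k_n: the max dimension of a polyhedral cone in it *)
    ((exists (m : nat) (G : 'M[R]_(m, N n)), cone_in_TM k G /\ cone_dim G = d) /\
     (forall (m : nat) (G : 'M[R]_(m, N n)), cone_in_TM k G -> (cone_dim G <= d)%N)).
Proof.
pose P := fun Cs : {ffun 'I_k -> {set Cube n}} => forall i, slicing R (Cs i).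
have P0 : P [ffun _ => set0].
  move=> i; rewrite ffunE; exists (-1), (fun _ => 0) => v; split; first by rewrite inE.
  by move=> _; rewrite big1 ?addr0 ?ltrN10 // => j _; rewrite mul0r.
have [Cm [PCm Hmax]] := @exmax _ P (fun Cs : {ffun 'I_k -> {set Cube n}} => \rank (rbmA R Cs)) _ P0.
exists (\rank (rbmA R Cm)); split; [split|split].
- by exists Cm.
- move=> Cs HCs; rewrite -rbmA_ffun; apply: Hmax => i; rewrite ffunE; exact: HCs.
- have [m [G [HG HrG]]] := lower PCm.
  by exists m, G; split.
- move=> m G HG; rewrite /cone_dim.
  pose K := fun y : 'rV[R]_(N n) => exists lam : 'rV[R]_m,
    (forall i, 0 <= lam 0 i) /\ y = lam *m G.
  have [Cs0 [PCs0 HCs0]] : exists Cs, P Cs /\ forall y, K y -> (y <= (rbmA R Cs)^T)%MS.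
    apply: (@cover R _ P _ _ (fun Cs => (rbmA R Cs)^T) K).
    - by exists 0; split=> [i|]; rewrite ?mxE ?mul0mx.
    - move=> x y [l1 [H1 ->]] [l2 [H2 ->]]; exists (l1 + l2); split.
        by move=> i; rewrite mxE addr_ge0.
      by rewrite mulmxDl.
    - move=> a x Ha [l [Hl ->]]; exists (a *: l); split.
        by move=> i; rewrite mxE mulr_ge0.
      by rewrite scalemxAl.
    - move=> y [l [Hl ->]]; have [W [b [c ->]]] := HG l Hl.
      exact: upper.
  have HGB : (G <= (rbmA R Cs0)^T)%MS.
    apply/row_subP => i; rewrite rowE; apply: HCs0; exists 'e_i; split=> // j.
    by rewrite mxE ler0n.
  apply: (leq_trans (mxrankS HGB)); rewrite mxrank_tr; exact: Hmax.
Qed.
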